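(* Let a regular triangular grid in $\mathbb{R}^2$ with grid-size parameter $h$ be given, and consider the scalar steady conservation law $\partial_x f(u)+\partial_y g(u)=s(x,y)$ with smooth flux ${\bf f}=(f,g)$ and smooth source $s$. At an interior node $j$ define the U-MUSCL-SSQ residual $$Res_j=\frac{1}{V_j}\sum_{k\in\{k_j\}}\phi_{jk}A_{jk}-\tilde s_j,\qquad \tilde s_j=\frac1{V_j}\sum_{k\in\{k_j\}}\psi_{jk}V_{jk},$$ with $\phi_{jk}=\tfrac12[f_n(u_L)+f_n(u_R)]-\tfrac12\hat D_n(u_R-u_L)$, $f_n={\bf f}\cdot\hat{\bf n}_{jk}$, $\hat D_n=|\partial f_n/\partial u|$ evaluated at an intermediate state, $u_L=u_j+\tfrac{\kappa}{2}(u_k-u_j)+\tfrac{1-\kappa}{2}\overline\nabla u_j\cdot({\bf x}_k-{\bf x}_j)$, $u_R=u_k-\tfrac{\kappa}{2}(u_k-u_j)-\tfrac{1-\kappa}{2}\overline\nabla u_k\cdot({\bf x}_k-{\bf x}_j)$ with $\kappa=1/2$, $V_{jk}=\tfrac14({\bf x}_k-{\bf x}_j)\cdot{\bf n}_{jk}$, and $$\psi_{jk}=\kappa_s\frac{s_j+s_k}{2}+(1-\kappa_s)\Big[s_j+\tfrac12\overline\nabla s_j\cdot({\bf x}_k-{\bf x}_j)\Big],\qquad s_j=s({\bf x}_j).$$ If $\kappa_s=1/4$, then for every smooth exact solution $u$ (with $u_j=u({\bf x}_j)$), the truncation error satisfies $TE_j=Res_j=O(h^3)$; more precisely, $Res_j=\frac{1}{48V_j}[Q_{xx}+Q_{yy}+Q_{xy}]\,r_j+O(h^3)$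 with $r=\partial_xf+\partial_yg-s$, $Q_{xx}=\sum_k n_x\Delta x^3\,\partial_{xx}$, $Q_{yy}=\sum_k n_y\Delta y^3\,\partial_{yy}$, $Q_{xy}=\sum_k 3n_x\Delta x^2\Delta y\,\partial_{xy}$, where $\Delta x=x_k-x_j$, $\Delta y=y_k-y_j$, ${\bf n}_{jk}=(n_x,n_y)$.
   Context: Grid: a triangular grid is regular if every (interior) node has an identical compact stencil of edge-connected neighbors, the stencil is symmetric with respect to the central node (point symmetric), and it is translation invariant: for any edge-connected nodes $j,k$ the stencil of $j$ translated along the edge $jk$ coincides with the stencil of $k$ (examples: right-isosceles triangles from splitting squares, equilateral triangles; any linear image of a regular grid is regular). $h$ denotes the grid scale (the grid is $h$ times a fixed reference regular grid). Discretization: node-centered edge-based method on the median dual mesh; $\{k_j\}$ is the set of edge-connected neighbors of $j$, $V_j$ is the area of the median dual cell of $j$, ${\bf n}_{jk}$ is the directed-area vector of the dual face associated with edge $jk$ (sum of the two dual face segments from the edge midpoint to the centroids of the two adjacent triangles, oriented from $j$ to $k$), $A_{jk}=|{\bf n}_{jk}|$, $\hat{\bf n}_{jk}={\bf n}_{jk}/A_{jk}$. The gradients $\overline\nabla u_j$, $\overline\nabla s_j$ are nodal gradients computed by a linear least-squares fit over edge-connected neighbors. The truncation error $TE_j$ is $Res_j$ evaluated with the exact solution values at nodes. *)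

(* Defs.v *)
From Stdlib Require Import Reals Lra List.
Import ListNotations.
From Coquelicot Require Import Coquelicot.
Open Scope R_scope.

Definition smooth1 (f : R -> R) : Prop :=
  forall (n : nat) (x : R), ex_derive (Derive_n f n) x.

Definition px (F : R -> R -> R) : R -> R -> R :=
  fun x y => Derive (fun t => F t y) x.
Definition py (F : R -> R -> R) : R -> R -> R :=
  fun x y => Derive (fun t => F x t) y.

Fixpoint iterD (w : list bool) (F : R -> R -> R) : R -> R -> R :=
  match w with
  | nil => F
  | b :: w' => (if b then px else py) (iterD w' F)
  end.

Definition smooth2 (F : R -> R -> R) : Prop :=
  forall w : list bool,
    (forall x y, ex_derive (fun t => iterD w F t y) x /\
                 ex_derive (fun t => iterD w F x t) y) /\
    (forall z : R * R, continuous (fun z' : R * R => iterD w F (fst z') (snd z')) z).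

Definition vadd (a b : R * R) : R * R := (fst a + fst b, snd a + snd b).
Definition vsub (a b : R * R) : R * R := (fst a - fst b, snd a - snd b).
Definition vscal (c : R) (a : R * R) : R * R := (c * fst a, c * snd a).
Definition vopp (a : R * R) : R * R := (- fst a, - snd a).
Definition dot (a b : R * R) : R := fst a * fst b + snd a * snd b.
Definition det2 (a b : R * R) : R := fst a * snd b - snd a * fst b.
Definition vnorm (a : R * R) : R := sqrt (dot a a).
Definition rot (a : R * R) : R * R := (snd a, - fst a).

Definition ev (F : R -> R -> R) (x : R * R) : R := F (fst x) (snd x).

Definition sum6 (F : nat -> R) : R :=
  F 0%nat + F 1%nat + F 2%nat + F 3%nat + F 4%nat + F 5%nat.

(** * Regular triangular grid
    A regular triangular grid is the image of the reference lattice
    {m e1 + n e2} (e1, e2 linearly independent) scaled by h; every node has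
    the six edge-neighbours  x_j + h d_i, listed in cyclic (angular) order:
    e1, e2, e2-e1, -e1, -e2, e1-e2.  Consecutive neighbours d_i, d_(i+1)
    span the six triangles around the node. *)
Definition ref_offset (e1 e2 : R * R) (i : nat) : R * R :=
  match Nat.modulo i 6 with
  | 0%nat => e1
  | 1%nat => e2
  | 2%nat => vsub e2 e1
  | 3%nat => vopp e1
  | 4%nat => vopp e2
  | _ => vsub e1 e2
  end.

Section Scheme.
Variables (e1 e2 : R * R) (h : R).

(** edge vector x_k - x_j of the i-th edge (same at every node) *)
Definition dvec (i : nat) : R * R := vscal h (ref_offset e1 e2 i).

(** median dual cell area: one third of the area of each adjacent triangle *)
Definition Vcell : R :=
  sum6 (fun i => / 3 * (Rabs (det2 (dvec i) (dvec (S i))) / 2)).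

(** directed-area vector n_jk of the dual face of edge i (relative to node
    j): sum of the two dual-face segments centroid -> edge midpoint ->
    centroid, oriented from j to k.  Positions relative to x_j. *)
Definition nraw (i : nat) : R * R :=
  let m  := vscal (/ 2) (dvec i) in
  let c1 := vscal (/ 3) (vadd (dvec i) (dvec (i + 5))) in
  let c2 := vscal (/ 3) (vadd (dvec i) (dvec (S i))) in
  vadd (rot (vsub m c1)) (rot (vsub c2 m)).

Definition nvec (i : nat) : R * R :=
  if Rle_dec 0 (dot (nraw i) (dvec i)) then nraw i else vopp (nraw i).

Definition Aface (i : nat) : R := vnorm (nvec i).
Definition nhat (i : nat) : R * R := vscal (/ Aface i) (nvec i).

(** unweighted linear least-squares gradient of F at node x over its six
    edge-connected neighbours: the solution of the normal equations
    (sum d d^T) g = sum d (F(x+d) - F(x)). *)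
Definition lsq_grad (F : R * R -> R) (x : R * R) : R * R :=
  let a11 := sum6 (fun i => fst (dvec i) * fst (dvec i)) in
  let a12 := sum6 (fun i => fst (dvec i) * snd (dvec i)) in
  let a22 := sum6 (fun i => snd (dvec i) * snd (dvec i)) in
  let b1 := sum6 (fun i => fst (dvec i) * (F (vadd x (dvec i)) - F x)) in
  let b2 := sum6 (fun i => snd (dvec i) * (F (vadd x (dvec i)) - F x)) in
  let dt := a11 * a22 - a12 * a12 in
  ((a22 * b1 - a12 * b2) / dt, (a11 * b2 - a12 * b1) / dt).

Variables (f g : R -> R) (s u : R -> R -> R) (ustar : R * R -> R -> R -> R)
          (kappa kappas : R) (p : R * R).

Definition uLval (i : nat) : R :=
  let xk := vadd p (dvec i) in
  ev u p + kappa / 2 * (ev u xk - ev u p)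
    + (1 - kappa) / 2 * dot (lsq_grad (ev u) p) (dvec i).

Definition uRval (i : nat) : R :=
  let xk := vadd p (dvec i) in
  ev u xk - kappa / 2 * (ev u xk - ev u p)
    - (1 - kappa) / 2 * dot (lsq_grad (ev u) xk) (dvec i).

Definition fn (n : R * R) (w : R) : R := f w * fst n + g w * snd n.
Definition an (n : R * R) (w : R) : R := Derive f w * fst n + Derive g w * snd n.

Definition phi (i : nat) : R :=
  let uL := uLval i in
  let uR := uRval i in
  let Dn := Rabs (an (nhat i) (ustar (nhat i) uL uR)) in
  / 2 * (fn (nhat i) uL + fn (nhat i) uR) - / 2 * Dn * (uR - uL).

Definition Vjk (i : nat) : R := / 4 * dot (dvec i) (nvec i).

Definition psi (i : nat) : R :=
  let sj := ev s p in
  let sk := ev s (vadd p (dvec i)) in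
  kappas * ((sj + sk) / 2)
    + (1 - kappas) * (sj + / 2 * dot (lsq_grad (ev s) p) (dvec i)).

Definition stilde : R := / Vcell * sum6 (fun i => psi i * Vjk i).

Definition Res : R := / Vcell * sum6 (fun i => phi i * Aface i) - stilde.

Definition rfun : R -> R -> R :=
  fun x y => px (fun a b => f (u a b)) x y + py (fun a b => g (u a b)) x y - s x y.

Definition Qterm : R :=
  sum6 (fun i =>
    let dx := fst (dvec i) in let dy := snd (dvec i) in
    let nx := fst (nvec i) in let ny := snd (nvec i) in
    nx * dx ^ 3 * ev (px (px rfun)) p
    + ny * dy ^ 3 * ev (py (py rfun)) p
    + 3 * nx * dx ^ 2 * dy * ev (px (py rfun)) p).

End Scheme.

(* Main.v *)
Require Import Defs.
From Stdlib Require Import Reals Lra Lia List.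
From Coquelicot Require Import Coquelicot.
Open Scope R_scope.

(** * O-calculus *)
Definition Oh (n : nat) (E : R -> R) : Prop :=
  exists C h0, 0 <= C /\ 0 < h0 /\ forall h, 0 < h < h0 -> Rabs (E h) <= C * h ^ n.

Lemma Oh_ext n E E' : (forall h, 0 < h -> E h = E' h) -> Oh n E -> Oh n E'.
Proof.
  intros He [C [h0 [HC [Hh0 H]]]]. exists C, h0; repeat split; auto.
  intros h Hh. rewrite <- He by lra. auto.
Qed.

Lemma Oh_plus n E F : Oh n E -> Oh n F -> Oh n (fun h => E h + F h).
Proof.
  intros [C1 [h1 [HC1 [Hh1 H1]]]] [C2 [h2 [HC2 [Hh2 H2]]]].
  exists (C1 + C2), (Rmin h1 h2); repeat split; try lra.
  - apply Rmin_glb_lt; auto.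
  - intros h Hh. assert (h < h1) by (eapply Rlt_le_trans; [apply Hh|apply Rmin_l]).
    assert (h < h2) by (eapply Rlt_le_trans; [apply Hh|apply Rmin_r]).
    eapply Rle_trans; [apply Rabs_triang|].
    specialize (H1 h (conj (proj1 Hh) H)). specialize (H2 h (conj (proj1 Hh) H0)). lra.
Qed.

Lemma Oh_scal n c E : Oh n E -> Oh n (fun h => c * E h).
Proof.
  intros [C [h0 [HC [Hh0 H]]]]. exists (Rabs c * C), h0; repeat split; auto.
  - apply Rmult_le_pos; auto; apply Rabs_pos.
  - intros h Hh. rewrite Rabs_mult, Rmult_assoc. apply Rmult_le_compat_l; auto. apply Rabs_pos.
Qed.

Lemma Oh_opp n E : Oh n E -> Oh n (fun h => - E h).
Proof. intros H. apply (Oh_ext _ (fun h => -1 * E h)). intros; ring. now apply Oh_scal. Qed.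

Lemma Oh_minus n E F : Oh n E -> Oh n F -> Oh n (fun h => E h - F h).
Proof. intros. apply Oh_plus; auto. now apply Oh_opp. Qed.

Lemma Oh_mul n m E F : Oh n E -> Oh m F -> Oh (n + m) (fun h => E h * F h).
Proof.
  intros [C1 [h1 [HC1 [Hh1 H1]]]] [C2 [h2 [HC2 [Hh2 H2]]]].
  exists (C1 * C2), (Rmin h1 h2); repeat split; try lra.
  - apply Rmult_le_pos; auto.
  - apply Rmin_glb_lt; auto.
  - intros h Hh. assert (h < h1) by (eapply Rlt_le_trans; [apply Hh|apply Rmin_l]).
    assert (h < h2) by (eapply Rlt_le_trans; [apply Hh|apply Rmin_r]).
    specialize (H1 h (conj (proj1 Hh) H)). specialize (H2 h (conj (proj1 Hh) H0)).
    rewrite Rabs_mult, pow_add.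
    replace (C1 * C2 * (h ^ n * h ^ m)) with ((C1 * h^n) * (C2 * h^m)) by ring.
    apply Rmult_le_compat; auto; apply Rabs_pos.
Qed.

Lemma Oh_weaken n m E : (m <= n)%nat -> Oh n E -> Oh m E.
Proof.
  intros Hmn [C [h0 [HC [Hh0 H]]]]. exists C, (Rmin h0 1); repeat split; auto.
  - apply Rmin_glb_lt; lra.
  - intros h Hh. assert (h < h0) by (eapply Rlt_le_trans; [apply Hh|apply Rmin_l]).
    assert (h < 1) by (eapply Rlt_le_trans; [apply Hh|apply Rmin_r]).
    eapply Rle_trans; [apply H; lra|]. apply Rmult_le_compat_l; auto.
    replace n with (m + (n - m))%nat by lia. rewrite pow_add.
    rewrite <- (Rmult_1_r (h ^ m)) at 2. apply Rmult_le_compat_l.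
    + apply pow_le; lra.
    + rewrite <- (pow1 (n - m)). apply pow_incr; lra.
Qed.

Lemma Oh_const c : Oh 0 (fun _ => c).
Proof. exists (Rabs c), 1; repeat split; try lra. apply Rabs_pos. intros; simpl; lra. Qed.

Lemma Oh_pow k : Oh k (fun h => h ^ k).
Proof.
  exists 1, 1; repeat split; try lra. intros h Hh.
  rewrite Rabs_right. lra. apply Rle_ge, pow_le; lra.
Qed.

Lemma Oh_monom n k c : (n <= k)%nat -> Oh n (fun h => c * h ^ k).
Proof. intros. apply Oh_scal. apply (Oh_weaken k); auto. apply Oh_pow. Qed.

Lemma Oh_mul0 n E F : Oh n E -> Oh 0 F -> Oh n (fun h => E h * F h).
Proof. intros. replace n with (n + 0)%nat by lia. now apply Oh_mul. Qed.

Lemma Oh_divh n E : Oh (S n) E -> Oh n (fun h => E h / h).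
Proof.
  intros [C [h0 [HC [Hh0 H]]]]. exists C, h0; repeat split; auto.
  intros h Hh. unfold Rdiv. rewrite Rabs_mult, Rabs_inv, (Rabs_right h) by lra.
  apply (Rmult_le_reg_r h); [lra|]. rewrite Rmult_assoc, Rinv_l by lra.
  rewrite Rmult_1_r. specialize (H h Hh). simpl in H. lra.
Qed.

Lemma Oh_sum6 n E : (forall i, Oh n (E i)) -> Oh n (fun h => sum6 (fun i => E i h)).
Proof.
  intros H. unfold sum6. repeat apply Oh_plus; auto.
Qed.

Lemma Oh_bound1 E : Oh 1 E -> exists h0, 0 < h0 /\ forall h, 0 < h < h0 -> Rabs (E h) <= 1.
Proof.
  intros [C [h0 [HC [Hh0 H]]]]. exists (Rmin h0 (/ (C + 1))). split.
  - apply Rmin_glb_lt; auto. apply Rinv_0_lt_compat; lra.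
  - intros h Hh. assert (h < h0) by (eapply Rlt_le_trans; [apply Hh|apply Rmin_l]).
    assert (h < / (C+1)) by (eapply Rlt_le_trans; [apply Hh|apply Rmin_r]).
    eapply Rle_trans; [apply H; lra|]. simpl. rewrite Rmult_1_r.
    apply Rle_trans with ((C+1) * h). nra.
    apply (Rmult_lt_compat_l (C+1)) in H1; [|lra]. rewrite Rinv_r in H1; lra.
Qed.

(** * Jets *)
Record jet := mkJ { j0 : R; j1 : R; j2 : R; j3 : R }.
Definition jev (J : jet) (h : R) : R := j0 J + j1 J * h + j2 J * h ^ 2 + j3 J * h ^ 3.
Definition approx (n : nat) (F : R -> R) (J : jet) : Prop := Oh n (fun h => F h - jev J h).

Definition jadd (J K : jet) := mkJ (j0 J + j0 K) (j1 J + j1 K) (j2 J + j2 K) (j3 J + j3 K).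
Definition jscal (c : R) (J : jet) := mkJ (c * j0 J) (c * j1 J) (c * j2 J) (c * j3 J).
Definition jsub (J K : jet) := mkJ (j0 J - j0 K) (j1 J - j1 K) (j2 J - j2 K) (j3 J - j3 K).
Definition jmul (J K : jet) :=
  mkJ (j0 J * j0 K) (j0 J * j1 K + j1 J * j0 K)
      (j0 J * j2 K + j1 J * j1 K + j2 J * j0 K)
      (j0 J * j3 K + j1 J * j2 K + j2 J * j1 K + j3 J * j0 K).
Definition jconst (c : R) := mkJ c 0 0 0.
Definition jsum6 (J : nat -> jet) :=
  mkJ (sum6 (fun i => j0 (J i))) (sum6 (fun i => j1 (J i)))
      (sum6 (fun i => j2 (J i))) (sum6 (fun i => j3 (J i))).
Definition jshift (J : jet) := mkJ (j1 J) (j2 J) (j3 J) 0.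

Lemma approx_ext n F F' J J' : (forall h, 0 < h -> F h = F' h) ->
  j0 J = j0 J' -> j1 J = j1 J' -> j2 J = j2 J' -> j3 J = j3 J' ->
  approx n F J -> approx n F' J'.
Proof.
  intros HF H0 H1 H2 H3. unfold approx. apply Oh_ext. intros h Hh.
  rewrite HF by auto. unfold jev. rewrite H0, H1, H2, H3. auto.
Qed.

Lemma approx_add n F G J K : approx n F J -> approx n G K ->
  approx n (fun h => F h + G h) (jadd J K).
Proof.
  intros. unfold approx. eapply Oh_ext; [|apply Oh_plus; [apply H|apply H0]].
  intros; unfold jev, jadd; simpl; ring.
Qed.

Lemma approx_sub n F G J K : approx n F J -> approx n G K ->
  approx n (fun h => F h - G h) (jsub J K).
Proof.
  intros. unfold approx. eapply Oh_ext; [|apply Oh_minus; [apply H|apply H0]].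
  intros; unfold jev, jsub; simpl; ring.
Qed.

Lemma approx_scal n c F J : approx n F J -> approx n (fun h => c * F h) (jscal c J).
Proof.
  intros. unfold approx. eapply Oh_ext; [|apply (Oh_scal n c); apply H].
  intros; unfold jev, jscal; simpl; ring.
Qed.

Lemma approx_const n c : approx n (fun _ => c) (jconst c).
Proof.
  unfold approx. exists 0, 1; repeat split; try lra. intros. unfold jev, jconst; simpl.
  replace (c - (c + 0 * h + 0 * (h * (h * 1)) + 0 * (h * (h * (h * 1))))) with 0 by ring. rewrite Rabs_R0; lra.
Qed.

Lemma approx_sum6 n F J : (forall i, approx n (F i) (J i)) ->
  approx n (fun h => sum6 (fun i => F i h)) (jsum6 J).
Proof.
  intros. unfold approx. eapply Oh_ext; [|apply (Oh_sum6 n (fun i h => F i h - jev (J i) h)); apply H].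
  intros; unfold jev, jsum6, sum6; simpl; ring.
Qed.

Lemma Oh_jev J : Oh 0 (jev J).
Proof.
  eapply Oh_ext; [| apply Oh_plus; [apply Oh_plus; [apply Oh_plus; [apply (Oh_const (j0 J)) |apply (Oh_monom 0 1 (j1 J))]|apply (Oh_monom 0 2 (j2 J))]|apply (Oh_monom 0 3 (j3 J))]]; try lia.
  intros; unfold jev; simpl; ring.
Qed.

Lemma Oh_jev1 J : j0 J = 0 -> Oh 1 (jev J).
Proof.
  intros H0. eapply Oh_ext; [| apply Oh_plus; [apply Oh_plus; [apply (Oh_monom 1 1 (j1 J))|apply (Oh_monom 1 2 (j2 J))]|apply (Oh_monom 1 3 (j3 J))]]; try lia.
  intros; unfold jev; rewrite H0; simpl; ring.
Qed.

Lemma approx_bounded n F J : approx n F J -> Oh 0 F.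
Proof.
  intros H. apply (Oh_weaken n 0) in H; [|lia].
  eapply Oh_ext; [|apply Oh_plus; [apply H| apply (Oh_jev J)]]. intros; simpl; ring.
Qed.

Lemma approx_O1 n F J : (1 <= n)%nat -> j0 J = 0 -> approx n F J -> Oh 1 F.
Proof.
  intros Hn H0 H. apply (Oh_weaken n 1) in H; auto.
  eapply Oh_ext; [|apply Oh_plus; [apply H| apply (Oh_jev1 J H0)]]. intros; simpl; ring.
Qed.

Lemma approx_mul n F G J K : (n <= 4)%nat -> approx n F J -> approx n G K ->
  approx n (fun h => F h * G h) (jmul J K).
Proof.
  intros Hn HF HG. unfold approx in *.
  assert (Hb : Oh 0 G) by (eapply approx_bounded; eauto).
  assert (T1 : Oh n (fun h => (F h - jev J h) * G h)) by (apply Oh_mul0; auto).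
  assert (T2 : Oh n (fun h => (G h - jev K h) * jev J h)) by (apply Oh_mul0; auto; apply Oh_jev).
  assert (T3 : Oh 4 (fun h => (j1 J * j3 K + j2 J * j2 K + j3 J * j1 K) * h ^ 4
       + (j2 J * j3 K + j3 J * j2 K) * h ^ 5 + (j3 J * j3 K) * h ^ 6)).
  { repeat apply Oh_plus; apply Oh_monom; lia. }
  apply (Oh_weaken 4 n) in T3; auto.
  eapply Oh_ext; [|apply Oh_plus; [apply Oh_plus; [apply T1|apply T2]|apply T3]].
  intros; unfold jev, jmul; simpl; ring.
Qed.

Lemma approx_divh n F J : j0 J = 0 -> approx (S n) F J ->
  approx n (fun h => F h / h) (jshift J).
Proof.
  intros H0 H. unfold approx. apply Oh_divh in H. eapply Oh_ext; [|apply H].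
  intros h Hh. unfold jev, jshift; simpl. rewrite H0. field. lra.
Qed.

Lemma approx_final F J : j0 J = 0 -> j1 J = 0 -> j2 J = 0 -> approx 3 F J -> Oh 3 F.
Proof.
  intros H0 H1 H2 H. eapply Oh_ext; [|apply Oh_plus; [apply H|apply (Oh_monom 3 3 (j3 J))]]; [|lia].
  intros; unfold jev; rewrite H0, H1, H2; ring.
Qed.

Lemma Oh_dom n E G K : 0 <= K -> (exists h1, 0 < h1 /\ forall h, 0 < h < h1 -> Rabs (E h) <= K * Rabs (G h)) ->
  Oh n G -> Oh n E.
Proof.
  intros HK [h1 [Hh1 H1]] [C [h0 [HC [Hh0 H]]]].
  exists (K * C), (Rmin h0 h1); repeat split.
  - apply Rmult_le_pos; auto.
  - apply Rmin_glb_lt; auto.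
  - intros h Hh. assert (h < h0) by (eapply Rlt_le_trans; [apply Hh|apply Rmin_l]).
    assert (h < h1) by (eapply Rlt_le_trans; [apply Hh|apply Rmin_r]).
    eapply Rle_trans; [apply H1; lra|]. rewrite Rmult_assoc.
    apply Rmult_le_compat_l; auto. apply H; lra.
Qed.

Ltac rring := match goal with |- ?A = ?B => change (@eq R A B) end; ring.
Ltac rfield := match goal with |- ?A = ?B => change (@eq R A B) end; field.

Lemma approx_weaken n m F J : (m <= n)%nat -> approx n F J -> approx m F J.
Proof. intros. unfold approx in *. eapply Oh_weaken; eauto. Qed.

Lemma approx_q2 n q : approx n (fun h => h ^ 2 * q) (mkJ 0 0 q 0).
Proof.
  unfold approx. exists 0, 1; repeat split; try lra. intros h Hh. unfold jev; cbn [j0 j1 j2 j3].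
  replace (h ^ 2 * q - (0 + 0 * h + q * h ^ 2 + 0 * h ^ 3)) with 0 by ring. rewrite Rabs_R0; lra.
Qed.

Lemma Oh_abs n E : Oh n E -> Oh n (fun h => Rabs (E h)).
Proof.
  intros [C [h0 [HC [Hh0 H]]]]. exists C, h0; repeat split; auto. intros. rewrite Rabs_Rabsolu. auto.
Qed.

Lemma iterD_app w w' F : iterD w (iterD w' F) = iterD (w ++ w') F.
Proof. induction w as [|b w IH]; simpl; auto. rewrite IH. reflexivity. Qed.

Lemma smooth2_iterD F w' : smooth2 F -> smooth2 (iterD w' F).
Proof. intros H w. rewrite iterD_app. apply H. Qed.

Lemma smooth2_cont F w x y : smooth2 F -> continuity_2d_pt (iterD w F) x y.
Proof.
  intros H. apply continuity_2d_pt_filterlim. apply (proj2 (H w) (x, y)).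
Qed.

Lemma ex_diff_all F : smooth2 F -> forall n w x y, ex_diff_n (iterD w F) n x y.
Proof.
  intros H n. induction n as [|n IH]; intros w x y.
  - simpl. split; auto. now apply smooth2_cont.
  - simpl. split; [now apply smooth2_cont|]. split; [apply (proj1 (H w) x y)|].
    split; [apply (proj1 (H w) x y)|]. split.
    + apply (IH (true :: w)).
    + apply (IH (false :: w)).
Qed.

Definition pd (F : R -> R -> R) m k x y := partial_derive m k F x y.

Definition tjet (F : R -> R -> R) x y v1 v2 : jet :=
  mkJ (F x y) (pd F 1 0 x y * v1 + pd F 0 1 x y * v2)
    (/ 2 * (pd F 2 0 x y * v1 ^ 2 + 2 * pd F 1 1 x y * v1 * v2 + pd F 0 2 x y * v2 ^ 2))
    (/ 6 * (pd F 3 0 x y * v1 ^ 3 + 3 * pd F 2 1 x y * v1 ^ 2 * v2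
            + 3 * pd F 1 2 x y * v1 * v2 ^ 2 + pd F 0 3 x y * v2 ^ 3)).

Lemma DL3 F x y v1 v2 h : DL_pol 3 F x y (h * v1) (h * v2) = jev (tjet F x y v1 v2) h.
Proof.
  unfold DL_pol, differential, jev, tjet, pd. simpl sum_f_R0.
  unfold Binomial.C. simpl. change (partial_derive 0 0 F x y) with (F x y). match goal with |- ?A = ?B => change (@eq R A B) end. field.
Qed.

Lemma taylor2 F x y v1 v2 : smooth2 F ->
  approx 4 (fun h => F (x + h * v1) (y + h * v2)) (tjet F x y v1 v2).
Proof.
  intros HF.
  assert (Hl : locally_2d (fun u v => ex_diff_n F (S 3) u v) x y).
  { exists (mkposreal 1 Rlt_0_1). intros. apply (ex_diff_all F HF (S 3) nil). }
  destruct (Taylor_Lagrange_2d F 3 x y Hl) as [D [delta Hd]].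
  set (M := Rabs v1 + Rabs v2 + 1).
  assert (HM : 0 < M) by (unfold M; pose proof (Rabs_pos v1); pose proof (Rabs_pos v2); lra).
  exists (Rabs D * M ^ 4), (delta / M). repeat split.
  - apply Rmult_le_pos; [apply Rabs_pos| apply pow_le; lra].
  - apply Rdiv_lt_0_compat; [apply cond_pos|lra].
  - intros h [Hh0 Hh1].
    assert (HhM : h * M < delta).
    { apply (Rmult_lt_compat_r M) in Hh1; auto. unfold Rdiv in Hh1.
      rewrite Rmult_assoc, Rinv_l, Rmult_1_r in Hh1; lra. }
    assert (B1 : Rabs (h * v1) <= h * M).
    { rewrite Rabs_mult, Rabs_right by lra. apply Rmult_le_compat_l; [lra|].
      unfold M; pose proof (Rabs_pos v2); lra. }
    assert (B2 : Rabs (h * v2) <= h * M).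
    { rewrite Rabs_mult, Rabs_right by lra. apply Rmult_le_compat_l; [lra|].
      unfold M; pose proof (Rabs_pos v1); lra. }
    specialize (Hd (x + h * v1) (y + h * v2)).
    replace (x + h * v1 - x) with (h * v1) in Hd by ring.
    replace (y + h * v2 - y) with (h * v2) in Hd by ring.
    rewrite DL3 in Hd.
    assert (Hmax : Rmax (Rabs (h * v1)) (Rabs (h * v2)) <= h * M) by (apply Rmax_lub; auto).
    assert (Hm0 : 0 <= Rmax (Rabs (h * v1)) (Rabs (h * v2))).
    { eapply Rle_trans; [apply Rabs_pos| apply Rmax_l]. }
    eapply Rle_trans; [apply Hd; lra|].
    eapply Rle_trans; [apply Rmult_le_compat_r; [apply pow_le; auto| apply Rle_abs]|].
    replace (Rabs D * M ^ 4 * h ^ 4) with (Rabs D * (h * M) ^ 4) by ring.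
    apply Rmult_le_compat_l; [apply Rabs_pos|]. apply pow_incr. lra.
Qed.

(** * one-variable Taylor *)
Lemma smooth1_exn f : smooth1 f -> forall k t, ex_derive_n f k t.
Proof. intros H [|k] t; simpl; auto. Qed.

Lemma smooth1_cont f k t : smooth1 f -> continuity_pt (Derive_n f k) t.
Proof.
  intros H. apply continuity_pt_filterlim. apply (ex_derive_continuous (Derive_n f k)).
  apply H.
Qed.

Lemma smooth1_bound f k c : smooth1 f ->
  exists M, 0 <= M /\ forall t, Rabs (t - c) <= 1 -> Rabs (Derive_n f k t) <= M.
Proof.
  intros H.
  destruct (continuity_ab_maj (fun t => Rabs (Derive_n f k t)) (c - 1) (c + 1)) as [Mx [HM HMx]].
  - lra.
  - intros t _. apply (continuity_pt_comp (Derive_n f k) Rabs). apply smooth1_cont; auto.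
    apply Rcontinuity_abs.
  - exists (Rabs (Derive_n f k Mx)). split; [apply Rabs_pos|].
    intros t Ht. apply HM. apply Rabs_le_between in Ht. lra.
Qed.

Lemma taylor1 f c : smooth1 f -> exists K, 0 <= K /\ forall w, Rabs (w - c) <= 1 ->
  Rabs (f w - (f c + Derive_n f 1 c * (w - c) + Derive_n f 2 c / 2 * (w - c) ^ 2
               + Derive_n f 3 c / 6 * (w - c) ^ 3)) <= K * Rabs (w - c) ^ 4.
Proof.
  intros H. destruct (smooth1_bound f 4 c H) as [M [HM0 HM]].
  exists M. split; auto. intros w Hw.
  destruct (Rtotal_order c w) as [Hlt|[Heq|Hgt]].
  - destruct (Taylor_Lagrange f 3 c w Hlt) as [z [Hz Ht]].
    { intros; apply smooth1_exn; auto. }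
    rewrite Ht. match goal with |- Rabs ?X <= _ => replace X with ((w - c) ^ 4 / 24 * Derive_n f 4 z) end.
    2:{ simpl sum_f_R0. simpl Factorial.fact. simpl INR. simpl Derive_n. field. }
    rewrite Rabs_mult. unfold Rdiv. rewrite Rabs_mult, <- RPow_abs.
    assert (0 <= Rabs (w - c) ^ 4) by (apply pow_le, Rabs_pos).
    rewrite (Rabs_right (/ 24)) by lra.
    assert (Rabs (Derive_n f 4 z) <= M) by (apply HM; apply Rabs_le_between; apply Rabs_le_between in Hw; lra).
    pose proof (Rabs_pos (Derive_n f 4 z)); nra.
  - subst. replace (w - w) with 0 by ring. simpl. rewrite !Rmult_0_l, !Rmult_0_r.
    match goal with |- Rabs ?X <= _ => replace X with 0 by ring end. rewrite Rabs_R0. lra.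
  - assert (Hl : - c < - w) by lra.
    destruct (Taylor_Lagrange (fun t => f (- t)) 3 (- c) (- w) Hl) as [z [Hz Ht]].
    { intros t _ k _. apply ex_derive_n_comp_opp. exists (mkposreal 1 Rlt_0_1).
      intros; apply smooth1_exn; auto. }
    assert (Hd : forall k, Derive_n (fun t => f (- t)) k (- c) = (-1) ^ k * Derive_n f k c).
    { intros k. rewrite Derive_n_comp_opp. rewrite Ropp_involutive. auto.
      exists (mkposreal 1 Rlt_0_1). intros; apply smooth1_exn; auto. }
    assert (Hd4 : Derive_n (fun t => f (- t)) 4 z = Derive_n f 4 (- z)).
    { rewrite Derive_n_comp_opp. simpl. ring.
      exists (mkposreal 1 Rlt_0_1). intros; apply smooth1_exn; auto. }
    rewrite Ropp_involutive in Ht. rewrite Ht. rewrite Hd4.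
    cbn [sum_f_R0] in *. rewrite !Hd.
    match goal with |- Rabs ?X <= _ => replace X with ((w - c) ^ 4 / 24 * Derive_n f 4 (- z)) end.
    2:{ simpl Factorial.fact. simpl INR. simpl Derive_n. field. }
    rewrite Rabs_mult. unfold Rdiv. rewrite Rabs_mult, <- RPow_abs.
    assert (0 <= Rabs (w - c) ^ 4) by (apply pow_le, Rabs_pos).
    rewrite (Rabs_right (/ 24)) by lra.
    assert (Rabs (Derive_n f 4 (- z)) <= M) by (apply HM; apply Rabs_le_between; apply Rabs_le_between in Hw; lra).
    pose proof (Rabs_pos (Derive_n f 4 (- z))); nra.
Qed.

Lemma lip1 f c : smooth1 f -> exists L, 0 <= L /\ forall w, Rabs (w - c) <= 1 ->
  Rabs (Derive_n f 1 w - Derive_n f 1 c) <= L * Rabs (w - c).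
Proof.
  intros H. destruct (smooth1_bound f 2 c H) as [M [HM0 HM]].
  exists M. split; auto. intros w Hw.
  destruct (MVT_gen (Derive_n f 1) c w (Derive_n f 2)) as [z [Hz Heq]].
  - intros; apply Derive_correct. apply H.
  - intros; apply smooth1_cont; auto.
  - rewrite Heq, Rabs_mult. apply Rmult_le_compat_r; [apply Rabs_pos|].
    apply HM. apply Rabs_le_between in Hw. apply Rabs_le_between.
    pose proof (Rmin_l c w); pose proof (Rmin_r c w); pose proof (Rmax_l c w); pose proof (Rmax_r c w).
    destruct Hz.
    split.
    + destruct (Rle_dec c w); [rewrite Rmin_left in *; lra| rewrite Rmin_right in *; lra].
    + destruct (Rle_dec c w); [rewrite Rmax_right in *; lra| rewrite Rmax_left in *; lra].
Qed.

Definition jcomp (f : R -> R) (J : jet) : jet :=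
  let c := j0 J in let d := mkJ 0 (j1 J) (j2 J) (j3 J) in
  jadd (jconst (f c)) (jadd (jscal (Derive_n f 1 c) d)
    (jadd (jscal (Derive_n f 2 c / 2) (jmul d d)) (jscal (Derive_n f 3 c / 6) (jmul d (jmul d d))))).

Lemma approx_comp f W J : smooth1 f -> approx 4 W J -> approx 4 (fun h => f (W h)) (jcomp f J).
Proof.
  intros Hf HW. set (c := j0 J). set (d := mkJ 0 (j1 J) (j2 J) (j3 J)).
  assert (Hd : approx 4 (fun h => W h - c) d).
  { eapply approx_ext; [| | | | | apply (approx_sub 4 W (fun _ => c) J (jconst c)); [apply HW|apply approx_const]].
    all: intros; unfold d, c, jconst; simpl; try ring; auto. }
  assert (Hd1 : Oh 1 (fun h => W h - c)) by (apply (approx_O1 4 _ d); [lia|reflexivity|apply Hd]).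
  destruct (taylor1 f c Hf) as [K [HK HT]].
  destruct (Oh_bound1 _ Hd1) as [h1 [Hh1 Hb]].
  assert (Hd4 : Oh 4 (fun h => (W h - c) * ((W h - c) * ((W h - c) * (W h - c))))).
  { change 4%nat with (1 + (1 + (1 + 1)))%nat. repeat apply Oh_mul; auto. }
  assert (HR : Oh 4 (fun h => f (W h) - (f c + Derive_n f 1 c * (W h - c) + Derive_n f 2 c / 2 * (W h - c) ^ 2
               + Derive_n f 3 c / 6 * (W h - c) ^ 3))).
  { apply (Oh_dom 4 _ (fun h => (W h - c) * ((W h - c) * ((W h - c) * (W h - c)))) K HK); auto. exists h1. split; auto. intros h Hh.
    eapply Rle_trans; [apply HT; apply Hb; auto|]. right. f_equal.
    rewrite !Rabs_mult. simpl. ring. }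
  assert (H2 : approx 4 (fun h => (W h - c) * (W h - c)) (jmul d d)) by (apply approx_mul; auto).
  assert (H3 : approx 4 (fun h => (W h - c) * ((W h - c) * (W h - c))) (jmul d (jmul d d))) by (apply approx_mul; auto).
  pose proof (approx_add 4 _ _ _ _ (approx_const 4 (f c)) (approx_add 4 _ _ _ _ (approx_scal 4 (Derive_n f 1 c) _ _ Hd) (approx_add 4 _ _ _ _ (approx_scal 4 (Derive_n f 2 c / 2) _ _ H2) (approx_scal 4 (Derive_n f 3 c / 6) _ _ H3)))) as HP.
  assert (HP' : approx 4 (fun h => f c + Derive_n f 1 c * (W h - c) + Derive_n f 2 c / 2 * (W h - c) ^ 2
               + Derive_n f 3 c / 6 * (W h - c) ^ 3) (jcomp f J)).
  { eapply approx_ext; [| | | | | apply HP]; intros; unfold jcomp; simpl; try ring; reflexivity. }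
  clear HP; rename HP' into HP.
  unfold approx in *. eapply Oh_ext; [|apply Oh_plus; [apply HR|apply HP]].
  intros; simpl; ring.
Qed.

Lemma schwarz2 F x y : smooth2 F -> px (py F) x y = py (px F) x y.
Proof.
  intros HF. apply Schwarz.
  - exists (mkposreal 1 Rlt_0_1). intros. repeat split.
    + exact (proj1 (proj1 (HF nil) u v)).
    + exact (proj2 (proj1 (HF nil) u v)).
    + exact (proj1 (proj1 (HF (false :: nil)) u v)).
    + exact (proj2 (proj1 (HF (true :: nil)) u v)).
  - exact (smooth2_cont F (true :: false :: nil) x y HF).
  - exact (smooth2_cont F (false :: true :: nil) x y HF).
Qed.

Section Deriv.
Variables (f g : R -> R) (s u : R -> R -> R).
Hypotheses (Hf : smooth1 f) (Hg : smooth1 g) (Hs : smooth2 s) (Hu : smooth2 u).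

Lemma exdx F (HF : smooth2 F) w x y : ex_derive (fun t => iterD w F t y) x.
Proof. apply (proj1 (HF w) x y). Qed.
Lemma exdy F (HF : smooth2 F) w x y : ex_derive (fun t => iterD w F x t) y.
Proof. apply (proj2 (proj1 (HF w) x y)). Qed.

Lemma exF0 F (HF : smooth1 F) w : ex_derive (fun x => F x) w.
Proof. exact (HF 0%nat w). Qed.
Lemma exF1 F (HF : smooth1 F) w : ex_derive (fun x0 => Derive (fun x1 => F x1) x0) w.
Proof. exact (HF 1%nat w). Qed.
Lemma exF2 F (HF : smooth1 F) w : ex_derive (fun x0 => Derive (fun x1 => Derive (fun x2 => F x2) x1) x0) w.
Proof. exact (HF 2%nat w). Qed.

Ltac wordof G := match G with
  | px ?H => let w := wordof H in constr:(true :: w)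
  | py ?H => let w := wordof H in constr:(false :: w)
  | _ => constr:(@nil bool) end.
Ltac baseof G := match G with px ?H => baseof H | py ?H => baseof H | _ => G end.
Ltac smooth_hyp B := match B with u => exact Hu | s => exact Hs end.
Ltac exd_one := match goal with
  | |- True => exact I
  | |- ex_derive (fun _ => Derive (fun _ => Derive (fun _ => ?F _) _) _) _ =>
      first [ apply (exF2 f Hf) | apply (exF2 g Hg) ]
  | |- ex_derive (fun _ => Derive (fun _ => ?F _) _) _ =>
      first [ apply (exF1 f Hf) | apply (exF1 g Hg) ]
  | |- ex_derive (fun _ => ?F _) _ =>
      first [ apply (exF0 f Hf) | apply (exF0 g Hg) ]
  | |- ex_derive (fun x0 => ?G x0 ?y) ?x =>
      let B := baseof G in let w := wordof G in
      exact (exdx B ltac:(smooth_hyp B) w x y)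
  | |- ex_derive (fun x0 => ?G ?x x0) ?y =>
      let B := baseof G in let w := wordof G in
      exact (exdy B ltac:(smooth_hyp B) w x y)
  end.
Ltac exd := repeat split; exd_one.

Definition UU w := iterD w u.
Definition SS w := iterD w s.
Definition r0f x y := Derive_n f 1 (u x y) * UU (true :: nil) x y + Derive_n g 1 (u x y) * UU (false :: nil) x y - s x y.

Lemma rfun_eq x y : rfun f g s u x y = r0f x y.
Proof.
  unfold rfun, r0f. f_equal. f_equal.
  - unfold px. apply is_derive_unique. auto_derive; [exd|]. unfold UU; cbv [iterD px py Derive_n]. ring.
  - unfold py. apply is_derive_unique. auto_derive; [exd|]. unfold UU; cbv [iterD px py Derive_n]. ring.
Qed.

Definition rxf x y := Derive_n f 2 (u x y) * UU (true :: nil) x y ^ 2 + Derive_n f 1 (u x y) * UU (true :: true :: nil) x y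
  + Derive_n g 2 (u x y) * UU (true :: nil) x y * UU (false :: nil) x y + Derive_n g 1 (u x y) * UU (true :: false :: nil) x y
  - SS (true :: nil) x y.
Definition ryf x y := Derive_n f 2 (u x y) * UU (false :: nil) x y * UU (true :: nil) x y + Derive_n f 1 (u x y) * UU (true :: false :: nil) x y
  + Derive_n g 2 (u x y) * UU (false :: nil) x y ^ 2 + Derive_n g 1 (u x y) * UU (false :: false :: nil) x y
  - SS (false :: nil) x y.

Lemma px_rfun x y : px (rfun f g s u) x y = rxf x y.
Proof.
  unfold px at 1. rewrite (Derive_ext _ (fun t => r0f t y)) by (intros; apply rfun_eq).
  apply is_derive_unique. unfold r0f, UU. auto_derive; [exd|]. unfold rxf, UU, SS; cbv [iterD px py Derive_n]. ring.
Qed.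

Lemma py_rfun x y : py (rfun f g s u) x y = ryf x y.
Proof.
  unfold py at 1. rewrite (Derive_ext _ (fun t => r0f x t)) by (intros; apply rfun_eq).
  apply is_derive_unique. unfold r0f, UU. auto_derive; [exd|].
  unfold ryf, UU, SS. cbv [iterD]. rewrite (schwarz2 u x y Hu). cbv [iterD px py Derive_n]. ring.
Qed.

Definition Dfu k x y := Derive_n f k (u x y).
Definition Dgu k x y := Derive_n g k (u x y).
Definition RXX x y := Dfu 3 x y * pd u 1 0 x y ^ 3 + 3 * Dfu 2 x y * pd u 1 0 x y * pd u 2 0 x y + Dfu 1 x y * pd u 3 0 x y
  + Dgu 3 x y * pd u 1 0 x y ^ 2 * pd u 0 1 x y + Dgu 2 x y * (pd u 2 0 x y * pd u 0 1 x y + 2 * pd u 1 0 x y * pd u 1 1 x y)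
  + Dgu 1 x y * pd u 2 1 x y - pd s 2 0 x y.
Definition RYY x y := Dfu 3 x y * pd u 0 1 x y ^ 2 * pd u 1 0 x y + Dfu 2 x y * (pd u 0 2 x y * pd u 1 0 x y + 2 * pd u 0 1 x y * pd u 1 1 x y)
  + Dfu 1 x y * pd u 1 2 x y + Dgu 3 x y * pd u 0 1 x y ^ 3 + 3 * Dgu 2 x y * pd u 0 1 x y * pd u 0 2 x y
  + Dgu 1 x y * pd u 0 3 x y - pd s 0 2 x y.
Definition RXY x y := Dfu 3 x y * pd u 1 0 x y ^ 2 * pd u 0 1 x y + Dfu 2 x y * (2 * pd u 1 1 x y * pd u 1 0 x y + pd u 0 1 x y * pd u 2 0 x y)
  + Dfu 1 x y * pd u 2 1 x y + Dgu 3 x y * pd u 1 0 x y * pd u 0 1 x y ^ 2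
  + Dgu 2 x y * (2 * pd u 0 1 x y * pd u 1 1 x y + pd u 1 0 x y * pd u 0 2 x y)
  + Dgu 1 x y * pd u 1 2 x y - pd s 1 1 x y.
Definition R00 x y := Dfu 1 x y * pd u 1 0 x y + Dgu 1 x y * pd u 0 1 x y - s x y.

Lemma r00 x y : rfun f g s u x y = R00 x y.
Proof. rewrite rfun_eq. reflexivity. Qed.

Lemma pxx_rfun x y : px (px (rfun f g s u)) x y = RXX x y.
Proof.
  unfold px at 1. rewrite (Derive_ext _ (fun t => rxf t y)) by (intros; apply px_rfun).
  apply is_derive_unique. unfold rxf, UU, SS. auto_derive; [exd|].
  unfold RXX, Dfu, Dgu, pd; cbv [iterD px py Derive_n partial_derive]. ring.
Qed.

Lemma pxy_rfun x y : px (py (rfun f g s u)) x y = RXY x y.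
Proof.
  unfold px at 1. rewrite (Derive_ext _ (fun t => ryf t y)) by (intros; apply py_rfun).
  apply is_derive_unique. unfold ryf, UU, SS. auto_derive; [exd|].
  unfold RXY, Dfu, Dgu, pd; cbv [iterD px py Derive_n partial_derive]. ring.
Qed.

Lemma pyy_rfun x y : py (py (rfun f g s u)) x y = RYY x y.
Proof.
  unfold py at 1. rewrite (Derive_ext _ (fun t => ryf x t)) by (intros; apply py_rfun).
  apply is_derive_unique. unfold ryf, UU, SS. auto_derive; [exd|].
  assert (E1 : py (px u) x y = px (py u) x y) by (symmetry; apply schwarz2; auto).
  assert (E2 : py (px (py u)) x y = px (py (py u)) x y).
  { symmetry; apply (schwarz2 (py u)). apply (smooth2_iterD u (false :: nil)); auto. }
  cbv [iterD px py] in *. rewrite E1, E2.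
  unfold RYY, Dfu, Dgu, pd; cbv [iterD px py Derive_n partial_derive]. ring.
Qed.
End Deriv.

Section Grid.
Variables (e1 e2 : R * R).
Definition ox m := fst (ref_offset e1 e2 m).
Definition oy m := snd (ref_offset e1 e2 m).
Definition A11 := sum6 (fun m => ox m * ox m).
Definition A12 := sum6 (fun m => ox m * oy m).
Definition A22 := sum6 (fun m => oy m * oy m).
Definition DT := A11 * A22 - A12 * A12.
Definition LQ (B1 B2 v1 v2 : R) := ((A22 * B1 - A12 * B2) * v1 + (A11 * B2 - A12 * B1) * v2) / DT.

Lemma fdvec h m : fst (dvec e1 e2 h m) = h * ox m.
Proof. reflexivity. Qed.
Lemma sdvec h m : snd (dvec e1 e2 h m) = h * oy m.
Proof. reflexivity. Qed.

Lemma lsq_dot h F x v1 v2 : h <> 0 -> DT <> 0 ->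
  dot (lsq_grad e1 e2 h F x) (h * v1, h * v2) =
  LQ (sum6 (fun m => ox m * (F (vadd x (dvec e1 e2 h m)) - F x)))
     (sum6 (fun m => oy m * (F (vadd x (dvec e1 e2 h m)) - F x))) v1 v2.
Proof.
  intros Hh HD. unfold lsq_grad, LQ, dot. cbv zeta. cbn [fst snd].
  unfold DT, A11, A12, A22 in *. unfold sum6 in *. rewrite !fdvec, !sdvec.
  field. split; auto.
  intro Hc. apply HD. apply (Rmult_eq_reg_l (h ^ 4)); [|apply pow_nonzero; auto]. rewrite Rmult_0_r.
  rewrite <- Hc. ring.
Qed.
End Grid.

Arguments pd : simpl never.

Section Conc.
Variables (a b c d : R).
Notation E1 := (a, b).
Notation E2 := (c, d).

Lemma ox0 : ox E1 E2 0 = a. Proof. reflexivity. Qed.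
Lemma ox1 : ox E1 E2 1 = c. Proof. reflexivity. Qed.
Lemma ox2 : ox E1 E2 2 = c - a. Proof. reflexivity. Qed.
Lemma ox3 : ox E1 E2 3 = - a. Proof. reflexivity. Qed.
Lemma ox4 : ox E1 E2 4 = - c. Proof. reflexivity. Qed.
Lemma ox5 : ox E1 E2 5 = a - c. Proof. reflexivity. Qed.
Lemma oy0 : oy E1 E2 0 = b. Proof. reflexivity. Qed.
Lemma oy1 : oy E1 E2 1 = d. Proof. reflexivity. Qed.
Lemma oy2 : oy E1 E2 2 = d - b. Proof. reflexivity. Qed.
Lemma oy3 : oy E1 E2 3 = - b. Proof. reflexivity. Qed.
Lemma oy4 : oy E1 E2 4 = - d. Proof. reflexivity. Qed.
Lemma oy5 : oy E1 E2 5 = b - d. Proof. reflexivity. Qed.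
Lemma ox6 : ox E1 E2 6 = a. Proof. reflexivity. Qed.
Lemma ox7 : ox E1 E2 7 = c. Proof. reflexivity. Qed.
Lemma ox8 : ox E1 E2 8 = c - a. Proof. reflexivity. Qed.
Lemma ox9 : ox E1 E2 9 = - a. Proof. reflexivity. Qed.
Lemma ox10 : ox E1 E2 10 = - c. Proof. reflexivity. Qed.
Lemma oy6 : oy E1 E2 6 = b. Proof. reflexivity. Qed.
Lemma oy7 : oy E1 E2 7 = d. Proof. reflexivity. Qed.
Lemma oy8 : oy E1 E2 8 = d - b. Proof. reflexivity. Qed.
Lemma oy9 : oy E1 E2 9 = - b. Proof. reflexivity. Qed.
Lemma oy10 : oy E1 E2 10 = - d. Proof. reflexivity. Qed.

Ltac osimpl := rewrite ?ox0, ?ox1, ?ox2, ?ox3, ?ox4, ?ox5, ?oy0, ?oy1, ?oy2, ?oy3, ?oy4, ?oy5, ?ox6, ?ox7, ?ox8, ?ox9, ?ox10, ?oy6, ?oy7, ?oy8, ?oy9, ?oy10.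

Lemma DT_val : DT E1 E2 = 12 * (a * d - b * c) ^ 2.
Proof. unfold DT, A11, A12, A22, sum6. osimpl. ring. Qed.

Hypothesis HD : a * d - b * c <> 0.
Lemma DT_nz : DT E1 E2 <> 0.
Proof. rewrite DT_val. apply Rmult_integral_contrapositive. split; [lra|]. apply pow_nonzero; auto. Qed.

Ltac jfield := rewrite ?DT_val; unfold A11, A12, A22, sum6; osimpl;
  match goal with |- ?A = ?B => change (@eq R A B) end; field; auto.

Definition Kf F x y v1 v2 :=
  LQ E1 E2 (sum6 (fun m => ox E1 E2 m * j3 (tjet F x y (ox E1 E2 m) (oy E1 E2 m))))
           (sum6 (fun m => oy E1 E2 m * j3 (tjet F x y (ox E1 E2 m) (oy E1 E2 m)))) v1 v2.

Lemma LQ_lin B1 B2 v1 v2 : LQ E1 E2 B1 B2 v1 v2 =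
  (A22 E1 E2 * v1 - A12 E1 E2 * v2) / DT E1 E2 * B1 + (A11 E1 E2 * v2 - A12 E1 E2 * v1) / DT E1 E2 * B2.
Proof. unfold LQ. field. apply DT_nz. Qed.

Lemma LQp_jet F x y v1 v2 : smooth2 F ->
  approx 4 (fun h => LQ E1 E2 (sum6 (fun m => ox E1 E2 m * (F (x + h * ox E1 E2 m) (y + h * oy E1 E2 m) - F x y)))
                              (sum6 (fun m => oy E1 E2 m * (F (x + h * ox E1 E2 m) (y + h * oy E1 E2 m) - F x y))) v1 v2)
    (mkJ 0 (j1 (tjet F x y v1 v2)) 0 (Kf F x y v1 v2)).
Proof.
  intros HF.
  assert (H1 : forall (w : nat -> R), approx 4 (fun h => sum6 (fun m => w m * (F (x + h * ox E1 E2 m) (y + h * oy E1 E2 m) - F x y)))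
     (jsum6 (fun m => jscal (w m) (jsub (tjet F x y (ox E1 E2 m) (oy E1 E2 m)) (jconst (F x y)))))).
  { intros w. apply approx_sum6. intros m. apply approx_scal. apply approx_sub; [apply taylor2; auto|apply approx_const]. }
  pose proof (approx_add 4 _ _ _ _ (approx_scal 4 ((A22 E1 E2 * v1 - A12 E1 E2 * v2) / DT E1 E2) _ _ (H1 (ox E1 E2)))
                                   (approx_scal 4 ((A11 E1 E2 * v2 - A12 E1 E2 * v1) / DT E1 E2) _ _ (H1 (oy E1 E2)))) as H2.
  eapply approx_ext; [| | | | | apply H2].
  - intros; rewrite LQ_lin; reflexivity.
  - unfold jsum6, jscal, jsub, jconst, jadd, tjet; cbn [j0 j1 j2 j3]. unfold sum6. ring.
  - unfold jsum6, jscal, jsub, jconst, jadd, tjet; cbn [j0 j1 j2 j3].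
    jfield.
  - unfold jsum6, jscal, jsub, jconst, jadd, tjet; cbn [j0 j1 j2 j3].
    jfield.
  - unfold Kf. rewrite LQ_lin. unfold jsum6, jscal, jsub, jconst, jadd; cbn [j0 j1 j2 j3]. unfold sum6. ring.
Qed.

Lemma LQk_jet F x y v1 v2 : smooth2 F ->
  approx 4 (fun h => LQ E1 E2 (sum6 (fun m => ox E1 E2 m * (F (x + h * v1 + h * ox E1 E2 m) (y + h * v2 + h * oy E1 E2 m) - F (x + h * v1) (y + h * v2))))
                              (sum6 (fun m => oy E1 E2 m * (F (x + h * v1 + h * ox E1 E2 m) (y + h * v2 + h * oy E1 E2 m) - F (x + h * v1) (y + h * v2)))) v1 v2)
    (mkJ 0 (j1 (tjet F x y v1 v2)) (2 * j2 (tjet F x y v1 v2)) (3 * j3 (tjet F x y v1 v2) + Kf F x y v1 v2)).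
Proof.
  intros HF.
  assert (H1 : forall (w : nat -> R), approx 4 (fun h => sum6 (fun m => w m * (F (x + h * v1 + h * ox E1 E2 m) (y + h * v2 + h * oy E1 E2 m) - F (x + h * v1) (y + h * v2))))
     (jsum6 (fun m => jscal (w m) (jsub (tjet F x y (v1 + ox E1 E2 m) (v2 + oy E1 E2 m)) (tjet F x y v1 v2))))).
  { intros w. apply approx_sum6. intros m. apply approx_scal. apply approx_sub; [|apply taylor2; auto].
    eapply approx_ext; [| | | | | apply (taylor2 F x y (v1 + ox E1 E2 m) (v2 + oy E1 E2 m) HF)]; try reflexivity.
    intros; cbv beta; f_equal; ring. }
  pose proof (approx_add 4 _ _ _ _ (approx_scal 4 ((A22 E1 E2 * v1 - A12 E1 E2 * v2) / DT E1 E2) _ _ (H1 (ox E1 E2)))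
                                   (approx_scal 4 ((A11 E1 E2 * v2 - A12 E1 E2 * v1) / DT E1 E2) _ _ (H1 (oy E1 E2)))) as H2.
  eapply approx_ext; [| | | | | apply H2].
  - intros; rewrite LQ_lin; reflexivity.
  - unfold jsum6, jscal, jsub, jconst, jadd, tjet; cbn [j0 j1 j2 j3]. unfold sum6. ring.
  - unfold jsum6, jscal, jsub, jconst, jadd, tjet; cbn [j0 j1 j2 j3]. jfield.
  - unfold jsum6, jscal, jsub, jconst, jadd, tjet; cbn [j0 j1 j2 j3]. jfield.
  - unfold Kf. rewrite LQ_lin. unfold jsum6, jscal, jsub, jconst, jadd, tjet; cbn [j0 j1 j2 j3]. jfield.
Qed.
End Conc.

Ltac osimpl := rewrite ?ox0, ?ox1, ?ox2, ?ox3, ?ox4, ?ox5, ?oy0, ?oy1, ?oy2, ?oy3, ?oy4, ?oy5, ?ox6, ?ox7, ?ox8, ?ox9, ?ox10, ?oy6, ?oy7, ?oy8, ?oy9, ?oy10.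

Arguments pd : simpl never.

Section Geo.
Variables (a b c d : R).
Notation E1 := (a, b).
Notation E2 := (c, d).
Hypothesis HD : a * d - b * c <> 0.
Definition sg := if Rle_dec 0 (a * d - b * c) then 1 else -1.
Definition Nr i := nraw E1 E2 1 i.
Definition NN i := vscal sg (Nr i).

Lemma nraw_h h i : nraw E1 E2 h i = vscal h (Nr i).
Proof.
  unfold Nr, nraw. cbv zeta. unfold dvec, vscal, vadd, vsub, rot.
  destruct (ref_offset E1 E2 i) as [x1 y1]; destruct (ref_offset E1 E2 (i + 5)) as [x2 y2];
  destruct (ref_offset E1 E2 (S i)) as [x3 y3]. cbn [fst snd]. f_equal; field.
Qed.

Lemma Nr_x i : fst (Nr i) = (oy E1 E2 (S i) - oy E1 E2 (i + 5)) / 3.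
Proof.
  unfold Nr, nraw, oy. cbv zeta. unfold dvec, vscal, vadd, vsub, rot.
  destruct (ref_offset E1 E2 i) as [x1 y1]; destruct (ref_offset E1 E2 (i + 5)) as [x2 y2];
  destruct (ref_offset E1 E2 (S i)) as [x3 y3]. cbn [fst snd]. field.
Qed.
Lemma Nr_y i : snd (Nr i) = - (ox E1 E2 (S i) - ox E1 E2 (i + 5)) / 3.
Proof.
  unfold Nr, nraw, ox. cbv zeta. unfold dvec, vscal, vadd, vsub, rot.
  destruct (ref_offset E1 E2 i) as [x1 y1]; destruct (ref_offset E1 E2 (i + 5)) as [x2 y2];
  destruct (ref_offset E1 E2 (S i)) as [x3 y3]. cbn [fst snd]. field.
Qed.

Lemma dotNr i : (i < 6)%nat -> fst (Nr i) * ox E1 E2 i + snd (Nr i) * oy E1 E2 i = 2 / 3 * (a * d - b * c).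
Proof.
  intros Hi. rewrite Nr_x, Nr_y.
  do 6 (destruct i as [|i]; [simpl (S _); simpl (_ + 5)%nat; osimpl; field|]). lia.
Qed.

Lemma sg_sq : sg * sg = 1.
Proof. unfold sg; destruct Rle_dec; ring. Qed.
Lemma sg_nz : sg <> 0.
Proof. unfold sg; destruct Rle_dec; lra. Qed.
Lemma sg_abs : Rabs (a * d - b * c) = sg * (a * d - b * c).
Proof.
  unfold sg; destruct Rle_dec.
  - rewrite Rabs_right; lra.
  - rewrite Rabs_left; lra.
Qed.

Lemma nvec_eq h i : 0 < h -> (i < 6)%nat -> nvec E1 E2 h i = vscal h (NN i).
Proof.
  intros Hh Hi. unfold nvec. rewrite nraw_h.
  assert (Hdot : dot (vscal h (Nr i)) (dvec E1 E2 h i) = h * h * (2 / 3 * (a * d - b * c))).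
  { rewrite <- (dotNr i Hi). unfold dot, dvec, vscal, ox, oy. cbn [fst snd]. ring. }
  rewrite Hdot. unfold NN, sg.
  destruct (Rle_dec 0 (a * d - b * c)) as [H1|H1];
  destruct (Rle_dec 0 (h * h * (2 / 3 * (a * d - b * c)))) as [H2|H2].
  - unfold vscal; destruct (Nr i); cbn [fst snd]; f_equal; ring.
  - exfalso. apply H2. apply Rmult_le_pos; [nra|lra].
  - exfalso. assert (a * d - b * c < 0) by lra. assert (0 < h * h) by nra. nra.
  - unfold vscal, vopp; destruct (Nr i); cbn [fst snd]; f_equal; ring.
Qed.

Lemma Vcell_eq h : 0 < h -> Vcell E1 E2 h = h ^ 2 * (sg * (a * d - b * c)).
Proof.
  intros Hh. rewrite <- sg_abs.
  assert (Hdet : forall i, (i < 6)%nat -> det2 (dvec E1 E2 h i) (dvec E1 E2 h (S i)) = h ^ 2 * (a * d - b * c)).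
  { intros i Hi. unfold det2. rewrite !fdvec, !sdvec.
    do 6 (destruct i as [|i]; [simpl (S _); osimpl; ring|]). lia. }
  unfold Vcell, sum6. rewrite !Hdet by lia.
  rewrite Rabs_mult, (Rabs_right (h ^ 2)) by (apply Rle_ge, pow_le; lra). field.
Qed.

Lemma fn_scal f g k n w : fn f g (vscal k n) w = k * fn f g n w.
Proof. unfold fn, vscal; cbn [fst snd]; ring. Qed.
Lemma an_scal f g k n w : an f g (vscal k n) w = k * an f g n w.
Proof. unfold an, vscal; cbn [fst snd]; ring. Qed.

Lemma dotNN i : (i < 6)%nat -> fst (NN i) * ox E1 E2 i + snd (NN i) * oy E1 E2 i = sg * (2 / 3 * (a * d - b * c)).
Proof. intros Hi. rewrite <- (dotNr i Hi). unfold NN, vscal; cbn [fst snd]; ring. Qed.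

Lemma vnorm_pos h i : 0 < h -> (i < 6)%nat -> 0 < vnorm (vscal h (NN i)).
Proof.
  intros Hh Hi. unfold vnorm. apply sqrt_lt_R0. unfold dot, vscal; cbn [fst snd].
  pose proof (dotNN i Hi) as H. pose proof sg_nz.
  destruct (NN i) as [n1 n2]; cbn [fst snd] in *.
  assert (n1 <> 0 \/ n2 <> 0).
  { destruct (Req_dec n1 0); destruct (Req_dec n2 0); auto. exfalso. subst.
    assert (Hz : sg * (2 / 3 * (a * d - b * c)) = 0) by (rewrite <- H; ring).
    apply Rmult_integral in Hz. destruct Hz as [Hz|Hz]; auto. lra. }
  destruct H1 as [H1|H1]; [assert (0 < n1 * n1) by (apply Rsqr_pos_lt; auto)|assert (0 < n2 * n2) by (apply Rsqr_pos_lt; auto)];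
  assert (0 < h * h) by nra; nra.
Qed.

Definition PhiT f g u ustar p h i :=
  / 2 * (fn f g (NN i) (uLval E1 E2 h u (1/2) p i) + fn f g (NN i) (uRval E1 E2 h u (1/2) p i))
  - / 2 * Rabs (an f g (NN i) (ustar (nhat E1 E2 h i) (uLval E1 E2 h u (1/2) p i) (uRval E1 E2 h u (1/2) p i)))
     * (uRval E1 E2 h u (1/2) p i - uLval E1 E2 h u (1/2) p i).

Lemma phiA f g u ustar p h i : 0 < h -> (i < 6)%nat ->
  phi E1 E2 h f g u ustar (1/2) p i * Aface E1 E2 h i = h * PhiT f g u ustar p h i.
Proof.
  intros Hh Hi. unfold phi, PhiT. cbv zeta.
  set (uL := uLval E1 E2 h u (1/2) p i). set (uR := uRval E1 E2 h u (1/2) p i).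
  set (ws := ustar (nhat E1 E2 h i) uL uR).
  unfold nhat, Aface. rewrite !(nvec_eq h i Hh Hi).
  pose proof (vnorm_pos h i Hh Hi) as HA. set (A := vnorm (vscal h (NN i))) in *.
  rewrite !fn_scal, an_scal, an_scal.
  rewrite !Rabs_mult, (Rabs_right (/ A)) by (apply Rle_ge, Rlt_le, Rinv_0_lt_compat; auto).
  rewrite (Rabs_right h) by lra. field. lra.
Qed.

Definition WW i := / 4 * (ox E1 E2 i * fst (NN i) + oy E1 E2 i * snd (NN i)).

Lemma Vjk_eq h i : 0 < h -> (i < 6)%nat -> Vjk E1 E2 h i = h ^ 2 * WW i.
Proof.
  intros Hh Hi. unfold Vjk, WW. rewrite (nvec_eq h i Hh Hi). unfold dot, vscal. rewrite fdvec, sdvec.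
  cbn [fst snd]. ring.
Qed.

Definition Q0 f g s u p := sum6 (fun i =>
  fst (NN i) * ox E1 E2 i ^ 3 * ev (px (px (rfun f g s u))) p
  + snd (NN i) * oy E1 E2 i ^ 3 * ev (py (py (rfun f g s u))) p
  + 3 * fst (NN i) * ox E1 E2 i ^ 2 * oy E1 E2 i * ev (px (py (rfun f g s u))) p).

Lemma Qterm_eq f g s u p h : 0 < h -> Qterm E1 E2 h f g s u p = h ^ 4 * Q0 f g s u p.
Proof.
  intros Hh. unfold Qterm, Q0, sum6. cbv zeta.
  repeat rewrite (nvec_eq h) by (auto; lia). unfold vscal. rewrite !fdvec, !sdvec. cbn [fst snd]. ring.
Qed.

Lemma Res_eq f g s u ustar p h : 0 < h ->
  Res E1 E2 h f g s u ustar (1/2) (1/4) p =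
  sum6 (fun i => PhiT f g u ustar p h i) / (h * (sg * (a * d - b * c)))
  - sum6 (fun i => psi E1 E2 h s (1/4) p i * WW i) / (sg * (a * d - b * c)).
Proof.
  intros Hh. unfold Res, stilde. rewrite Vcell_eq by auto. unfold sum6.
  repeat rewrite (phiA f g u ustar p h) by (auto; lia).
  repeat rewrite (Vjk_eq h) by (auto; lia).
  pose proof sg_nz. field. repeat split; auto; lra.
Qed.
End Geo.

Arguments pd : simpl never.

Section Jets.
Variables (a b c d : R).
Notation E1 := (a, b).
Notation E2 := (c, d).
Hypothesis HD : a * d - b * c <> 0.

Definition JL F x y v1 v2 :=
  mkJ (F x y) (/ 2 * j1 (tjet F x y v1 v2)) (/ 4 * j2 (tjet F x y v1 v2))
      (/ 4 * j3 (tjet F x y v1 v2) + / 4 * Kf a b c d F x y v1 v2).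
Definition JR F x y v1 v2 :=
  mkJ (F x y) (/ 2 * j1 (tjet F x y v1 v2)) (/ 4 * j2 (tjet F x y v1 v2))
      (- / 4 * Kf a b c d F x y v1 v2).

Lemma uL_jet u x y i : smooth2 u ->
  approx 4 (fun h => uLval E1 E2 h u (1/2) (x, y) i) (JL u x y (ox E1 E2 i) (oy E1 E2 i)).
Proof.
  intros Hu.
  pose proof (approx_add 4 _ _ _ _ (approx_const 4 (u x y)) (approx_add 4 _ _ _ _
     (approx_scal 4 (/4) _ _ (approx_sub 4 _ _ _ _ (taylor2 u x y (ox E1 E2 i) (oy E1 E2 i) Hu) (approx_const 4 (u x y))))
     (approx_scal 4 (/4) _ _ (LQp_jet a b c d HD u x y (ox E1 E2 i) (oy E1 E2 i) Hu)))) as H.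
  eapply approx_ext; [| | | | | apply H].
  - intros h Hh. symmetry.
    transitivity (ev u (x, y) + (/ 4 * (ev u (vadd (x, y) (h * ox E1 E2 i, h * oy E1 E2 i)) - ev u (x, y))
      + / 4 * LQ E1 E2 (sum6 (fun m => ox E1 E2 m * (ev u (vadd (x, y) (dvec E1 E2 h m)) - ev u (x, y))))
                       (sum6 (fun m => oy E1 E2 m * (ev u (vadd (x, y) (dvec E1 E2 h m)) - ev u (x, y))))
                       (ox E1 E2 i) (oy E1 E2 i))); [|reflexivity].
    unfold uLval. change (dvec E1 E2 h i) with (h * ox E1 E2 i, h * oy E1 E2 i).
    rewrite lsq_dot by (try lra; apply DT_nz; auto). field.
  - unfold JL, jadd, jscal, jsub, jconst, tjet; cbn [j0 j1 j2 j3]. field.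
  - unfold JL, jadd, jscal, jsub, jconst, tjet; cbn [j0 j1 j2 j3]. field.
  - unfold JL, jadd, jscal, jsub, jconst, tjet; cbn [j0 j1 j2 j3]. field.
  - unfold JL, jadd, jscal, jsub, jconst, tjet; cbn [j0 j1 j2 j3]. field.
Qed.

Lemma uR_jet u x y i : smooth2 u ->
  approx 4 (fun h => uRval E1 E2 h u (1/2) (x, y) i) (JR u x y (ox E1 E2 i) (oy E1 E2 i)).
Proof.
  intros Hu.
  pose proof (approx_sub 4 _ _ _ _ (approx_sub 4 _ _ _ _ (taylor2 u x y (ox E1 E2 i) (oy E1 E2 i) Hu)
     (approx_scal 4 (/4) _ _ (approx_sub 4 _ _ _ _ (taylor2 u x y (ox E1 E2 i) (oy E1 E2 i) Hu) (approx_const 4 (u x y)))))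
     (approx_scal 4 (/4) _ _ (LQk_jet a b c d HD u x y (ox E1 E2 i) (oy E1 E2 i) Hu))) as H.
  eapply approx_ext; [| | | | | apply H].
  - intros h Hh. symmetry.
    set (xk := vadd (x, y) (h * ox E1 E2 i, h * oy E1 E2 i)).
    transitivity (ev u xk - / 4 * (ev u xk - ev u (x, y))
      - / 4 * LQ E1 E2 (sum6 (fun m => ox E1 E2 m * (ev u (vadd xk (dvec E1 E2 h m)) - ev u xk)))
                       (sum6 (fun m => oy E1 E2 m * (ev u (vadd xk (dvec E1 E2 h m)) - ev u xk)))
                       (ox E1 E2 i) (oy E1 E2 i)); [|reflexivity].
    unfold uRval. change (dvec E1 E2 h i) with (h * ox E1 E2 i, h * oy E1 E2 i). fold xk.
    rewrite lsq_dot by (try lra; apply DT_nz; auto). field.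
  - unfold JR, jadd, jscal, jsub, jconst, tjet; cbn [j0 j1 j2 j3]. field.
  - unfold JR, jadd, jscal, jsub, jconst, tjet; cbn [j0 j1 j2 j3]. field.
  - unfold JR, jadd, jscal, jsub, jconst, tjet; cbn [j0 j1 j2 j3]. field.
  - unfold JR, jadd, jscal, jsub, jconst, tjet; cbn [j0 j1 j2 j3]. field.
Qed.
End Jets.

Arguments pd : simpl never.

Section Main.
Variables (a b c d : R).
Notation E1 := (a, b).
Notation E2 := (c, d).
Hypothesis HD : a * d - b * c <> 0.
Variables (f g : R -> R) (s u : R -> R -> R) (ustar : R * R -> R -> R -> R) (x y : R).
Hypotheses (Hf : smooth1 f) (Hg : smooth1 g) (Hs : smooth2 s) (Hu : smooth2 u).
Hypothesis Hust : forall n a b, Rmin a b <= ustar n a b <= Rmax a b.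

Notation OX := (ox E1 E2).
Notation OY := (oy E1 E2).
Notation N := (NN a b c d).

Definition JP F v1 v2 :=
  mkJ (F x y) (/ 2 * j1 (tjet F x y v1 v2)) (/ 8 * j2 (tjet F x y v1 v2))
      (/ 8 * j3 (tjet F x y v1 v2) + 3 / 8 * Kf a b c d F x y v1 v2).

Lemma psi_jet i :
  approx 4 (fun h => psi E1 E2 h s (1/4) (x, y) i) (JP s (OX i) (OY i)).
Proof.
  pose proof (approx_add 4 _ _ _ _
     (approx_scal 4 (1/4) _ _ (approx_scal 4 (/2) _ _ (approx_add 4 _ _ _ _ (approx_const 4 (s x y)) (taylor2 s x y (OX i) (OY i) Hs))))
     (approx_scal 4 (1 - 1/4) _ _ (approx_add 4 _ _ _ _ (approx_const 4 (s x y)) (approx_scal 4 (/2) _ _ (LQp_jet a b c d HD s x y (OX i) (OY i) Hs))))) as H.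
  eapply approx_ext; [| | | | | apply H].
  - intros h Hh. symmetry.
    transitivity (1/4 * (/2 * (ev s (x, y) + ev s (vadd (x, y) (h * OX i, h * OY i))))
      + (1 - 1/4) * (ev s (x, y) + / 2 * LQ E1 E2 (sum6 (fun m => OX m * (ev s (vadd (x, y) (dvec E1 E2 h m)) - ev s (x, y))))
                       (sum6 (fun m => OY m * (ev s (vadd (x, y) (dvec E1 E2 h m)) - ev s (x, y))))
                       (OX i) (OY i))); [|reflexivity].
    unfold psi. change (dvec E1 E2 h i) with (h * OX i, h * OY i).
    rewrite lsq_dot by (try lra; apply DT_nz; auto). field.
  - unfold JP, jadd, jscal, jsub, jconst, tjet; cbn [j0 j1 j2 j3]. field.
  - unfold JP, jadd, jscal, jsub, jconst, tjet; cbn [j0 j1 j2 j3]. field.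
  - unfold JP, jadd, jscal, jsub, jconst, tjet; cbn [j0 j1 j2 j3]. field.
  - unfold JP, jadd, jscal, jsub, jconst, tjet; cbn [j0 j1 j2 j3]. field.
Qed.

Definition JLi i := JL a b c d u x y (OX i) (OY i).
Definition JRi i := JR a b c d u x y (OX i) (OY i).
Definition JF i := jscal (/ 2) (jadd (jadd (jscal (fst (N i)) (jcomp f (JLi i))) (jscal (snd (N i)) (jcomp g (JLi i))))
                                    (jadd (jscal (fst (N i)) (jcomp f (JRi i))) (jscal (snd (N i)) (jcomp g (JRi i))))).

Definition uLh i h := uLval E1 E2 h u (1/2) (x, y) i.
Definition uRh i h := uRval E1 E2 h u (1/2) (x, y) i.

Lemma PhiF_jet i :
  approx 4 (fun h => / 2 * (fn f g (N i) (uLh i h) + fn f g (N i) (uRh i h))) (JF i).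
Proof.
  pose proof (uL_jet a b c d HD u x y i Hu) as HL. pose proof (uR_jet a b c d HD u x y i Hu) as HR.
  pose proof (approx_scal 4 (/2) _ _ (approx_add 4 _ _ _ _
     (approx_add 4 _ _ _ _ (approx_scal 4 (fst (N i)) _ _ (approx_comp f _ _ Hf HL)) (approx_scal 4 (snd (N i)) _ _ (approx_comp g _ _ Hg HL)))
     (approx_add 4 _ _ _ _ (approx_scal 4 (fst (N i)) _ _ (approx_comp f _ _ Hf HR)) (approx_scal 4 (snd (N i)) _ _ (approx_comp g _ _ Hg HR))))) as H.
  eapply approx_ext; [| | | | | apply H]; try reflexivity.
  intros h Hh. unfold fn, uLh, uRh. cbv beta. ring.
Qed.


Lemma rminmax_bound w l r z : Rmin l r <= w <= Rmax l r -> Rabs (w - z) <= Rabs (l - z) + Rabs (r - z).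
Proof.
  unfold Rmin, Rmax. intros Hw. destruct (Rle_dec l r);
  unfold Rabs; repeat destruct Rcase_abs; lra.
Qed.

Lemma an_lip n : exists K, 0 <= K /\ forall w, Rabs (w - u x y) <= 1 ->
  Rabs (an f g n w - an f g n (u x y)) <= K * Rabs (w - u x y).
Proof.
  destruct (lip1 f (u x y) Hf) as [Lf [HLf Hf1]]. destruct (lip1 g (u x y) Hg) as [Lg [HLg Hg1]].
  exists (Rabs (fst n) * Lf + Rabs (snd n) * Lg). split.
  - pose proof (Rabs_pos (fst n)); pose proof (Rabs_pos (snd n)). nra.
  - intros w Hw. unfold an.
    change (Derive f w) with (Derive_n f 1 w). change (Derive g w) with (Derive_n g 1 w).
    change (Derive f (u x y)) with (Derive_n f 1 (u x y)). change (Derive g (u x y)) with (Derive_n g 1 (u x y)).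
    replace (Derive_n f 1 w * fst n + Derive_n g 1 w * snd n - (Derive_n f 1 (u x y) * fst n + Derive_n g 1 (u x y) * snd n))
      with (fst n * (Derive_n f 1 w - Derive_n f 1 (u x y)) + snd n * (Derive_n g 1 w - Derive_n g 1 (u x y))) by ring.
    eapply Rle_trans; [apply Rabs_triang|]. rewrite !Rabs_mult.
    specialize (Hf1 w Hw). specialize (Hg1 w Hw).
    pose proof (Rabs_pos (fst n)); pose proof (Rabs_pos (snd n)).
    apply Rle_trans with (Rabs (fst n) * (Lf * Rabs (w - u x y)) + Rabs (snd n) * (Lg * Rabs (w - u x y))).
    + apply Rplus_le_compat; apply Rmult_le_compat_l; auto.
    + right; ring.
Qed.

Definition cc i := j3 (JRi i) - j3 (JLi i).

Lemma diss_i i : Oh 4 (fun h => / 2 * Rabs (an f g (N i) (ustar (nhat E1 E2 h i) (uLh i h) (uRh i h))) * (uRh i h - uLh i h)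
   - / 2 * Rabs (an f g (N i) (u x y)) * (cc i * h ^ 3)).
Proof.
  pose proof (uL_jet a b c d HD u x y i Hu) as HL. pose proof (uR_jet a b c d HD u x y i Hu) as HR.
  fold (JLi i) in HL. fold (JRi i) in HR.
  assert (Hd4 : Oh 4 (fun h => uRh i h - uLh i h - cc i * h ^ 3)).
  { pose proof (approx_sub 4 _ _ _ _ HR HL) as H. unfold approx in H. eapply Oh_ext; [|apply H].
    intros h Hh. unfold jev, cc, jsub, JRi, JLi, JR, JL, uRh, uLh; cbn [j0 j1 j2 j3]. ring. }
  assert (Hd3 : Oh 3 (fun h => uRh i h - uLh i h)).
  { eapply Oh_ext; [|apply Oh_plus; [apply (Oh_weaken 4 3); [lia|apply Hd4]|apply (Oh_monom 3 3 (cc i)); lia]].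
    intros; simpl; ring. }
  assert (Hl1 : Oh 1 (fun h => uLh i h - u x y)).
  { apply (approx_O1 4 _ (jsub (JLi i) (jconst (u x y)))); [lia| |apply approx_sub; [apply HL|apply approx_const]].
    unfold jsub, JLi, JL, jconst; cbn [j0]; ring. }
  assert (Hr1 : Oh 1 (fun h => uRh i h - u x y)).
  { apply (approx_O1 4 _ (jsub (JRi i) (jconst (u x y)))); [lia| |apply approx_sub; [apply HR|apply approx_const]].
    unfold jsub, JRi, JR, jconst; cbn [j0]; ring. }
  assert (HG : Oh 1 (fun h => Rabs (uLh i h - u x y) + Rabs (uRh i h - u x y))) by (apply Oh_plus; apply Oh_abs; auto).
  destruct (an_lip (N i)) as [K [HK HKl]].
  destruct (Oh_bound1 _ HG) as [h1 [Hh1 HGb]].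
  assert (Hw : Oh 1 (fun h => Rabs (an f g (N i) (ustar (nhat E1 E2 h i) (uLh i h) (uRh i h))) - Rabs (an f g (N i) (u x y)))).
  { apply (Oh_dom 1 _ (fun h => Rabs (uLh i h - u x y) + Rabs (uRh i h - u x y)) K HK); [|apply HG]. exists h1. split; auto. intros h Hh.
    set (w := ustar (nhat E1 E2 h i) (uLh i h) (uRh i h)).
    assert (Hwb : Rabs (w - u x y) <= Rabs (uLh i h - u x y) + Rabs (uRh i h - u x y)) by (apply rminmax_bound; apply Hust).
    specialize (HGb h Hh). pose proof (Rle_abs (Rabs (uLh i h - u x y) + Rabs (uRh i h - u x y))).
    pose proof (Rabs_pos (w - u x y)).
    eapply Rle_trans; [apply Rabs_triang_inv2|].
    eapply Rle_trans; [apply HKl; lra|].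
    rewrite (Rabs_right (Rabs (uLh i h - u x y) + Rabs (uRh i h - u x y))) by (apply Rle_ge; apply Rplus_le_le_0_compat; apply Rabs_pos).
    apply Rmult_le_compat_l; auto. }
  eapply Oh_ext; [|apply Oh_plus; [apply (Oh_scal 4 (/2)); apply (Oh_mul 1 3); [apply Hw|apply Hd3]
                                  |apply (Oh_scal 4 (/ 2 * Rabs (an f g (N i) (u x y)))); apply Hd4]].
  intros h Hh. cbv beta. ring.
Qed.

Lemma Kf_opp F v1 v2 : Kf a b c d F x y (- v1) (- v2) = - Kf a b c d F x y v1 v2.
Proof. unfold Kf, LQ. unfold Rdiv. ring. Qed.

Lemma Nx_opp i : (i < 3)%nat -> fst (N (i + 3)) = - fst (N i) /\ snd (N (i + 3)) = - snd (N i).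
Proof.
  intros Hi. unfold NN, vscal; cbn [fst snd]. rewrite !Nr_x, !Nr_y.
  do 3 (destruct i as [|i]; [cbn [Nat.add]; osimpl; split; field|]). lia.
Qed.

Lemma diss_sum h : sum6 (fun i => / 2 * Rabs (an f g (N i) (u x y)) * (cc i * h ^ 3)) = 0.
Proof.
  assert (Han : forall i, (i < 3)%nat -> an f g (N (i + 3)) (u x y) = - an f g (N i) (u x y)).
  { intros i Hi. destruct (Nx_opp i Hi) as [H1 H2]. unfold an. rewrite H1, H2. ring. }
  assert (X3 : OX 3 = - OX 0) by (osimpl; ring). assert (X4 : OX 4 = - OX 1) by (osimpl; ring).
  assert (X5 : OX 5 = - OX 2) by (osimpl; ring).
  assert (Y3 : OY 3 = - OY 0) by (osimpl; ring). assert (Y4 : OY 4 = - OY 1) by (osimpl; ring).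
  assert (Y5 : OY 5 = - OY 2) by (osimpl; ring).
  assert (Hc : forall i, (i < 3)%nat -> cc (i + 3) = - cc i).
  { intros i Hi. unfold cc, JRi, JLi, JR, JL, tjet; cbn [j3].
    do 3 (destruct i as [|i]; [cbn [Nat.add]; rewrite ?X3, ?X4, ?X5, ?Y3, ?Y4, ?Y5, !Kf_opp; field|]). lia. }
  unfold sum6.
  pose proof (Han 0%nat ltac:(lia)) as A0; pose proof (Han 1%nat ltac:(lia)) as A1; pose proof (Han 2%nat ltac:(lia)) as A2.
  pose proof (Hc 0%nat ltac:(lia)) as C0; pose proof (Hc 1%nat ltac:(lia)) as C1; pose proof (Hc 2%nat ltac:(lia)) as C2.
  cbn [Nat.add] in A0, A1, A2, C0, C1, C2.
  rewrite A0, A1, A2, C0, C1, C2, !Rabs_Ropp. ring.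
Qed.

Lemma diss_O4 : Oh 4 (fun h => sum6 (fun i => / 2 * Rabs (an f g (N i) (ustar (nhat E1 E2 h i) (uLh i h) (uRh i h))) * (uRh i h - uLh i h))).
Proof.
  eapply Oh_ext; [|apply (Oh_sum6 4 _ diss_i)].
  intros h Hh. cbv beta. transitivity (sum6 (fun i => / 2 * Rabs (an f g (N i) (ustar (nhat E1 E2 h i) (uLh i h) (uRh i h))) * (uRh i h - uLh i h)) - sum6 (fun i => / 2 * Rabs (an f g (N i) (u x y)) * (cc i * h ^ 3))).
  - unfold sum6. ring.
  - rewrite diss_sum. ring.
Qed.

Definition V0 := sg a b c d * (a * d - b * c).
Definition qq := Q0 a b c d f g s u (x, y) / (48 * V0).
Definition JPW := jsum6 (fun i => jscal (WW a b c d i) (JP s (OX i) (OY i))).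
Definition JT := jsub (jsub (jsub (jscal (/ V0) (jshift (jsum6 JF))) (jscal (/ V0) JPW)) (jconst (R00 f g s u x y))) (mkJ 0 0 qq 0).

Ltac jsimpl := cbn [j0 j1 j2 j3 jadd jscal jsub jmul jconst jshift jsum6 jcomp JF JLi JRi JL JR JT JPW JP tjet ev fst snd];
  unfold qq, Q0, V0, WW, sum6;
  cbn [j0 j1 j2 j3 jadd jscal jsub jmul jconst jshift jsum6 jcomp JF JLi JRi JL JR JT JPW JP tjet ev fst snd];
  unfold ev; cbn [fst snd];
  rewrite ?(pxx_rfun f g s u Hf Hg Hs Hu), ?(pxy_rfun f g s u Hf Hg Hs Hu), ?(pyy_rfun f g s u Hf Hg Hs Hu);
  unfold RXX, RYY, RXY, R00, Dfu, Dgu, NN, vscal; cbn [fst snd]; rewrite ?Nr_x, ?Nr_y; cbn [Nat.add]; osimpl.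

Lemma JF0 : j0 (jsum6 JF) = 0.
Proof. jsimpl. field. Qed.

Lemma JT0 : j0 JT = 0.
Proof. jsimpl. pose proof (sg_nz a b c d). field. split; auto. Qed.
Lemma JT1 : j1 JT = 0.
Proof. jsimpl. pose proof (sg_nz a b c d). field. split; auto. Qed.
Lemma JT2 : j2 JT = 0.
Proof. jsimpl. pose proof (sg_nz a b c d). field. split; auto. Qed.

Lemma main_O3 : Oh 3 (fun h => Res E1 E2 h f g s u ustar (1/2) (1/4) (x, y) - ev (rfun f g s u) (x, y)
   - / (48 * Vcell E1 E2 h) * Qterm E1 E2 h f g s u (x, y)).
Proof.
  pose proof (approx_sum6 4 _ _ PhiF_jet) as HF4. cbv beta in HF4.
  pose proof (approx_divh 3 _ _ JF0 HF4) as HF3.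
  pose proof (approx_sum6 4 (fun i h => WW a b c d i * psi E1 E2 h s (1/4) (x, y) i) _ (fun i => approx_scal 4 (WW a b c d i) _ _ (psi_jet i))) as HP4.
  fold JPW in HP4.
  pose proof (approx_sub 3 _ _ _ _ (approx_sub 3 _ _ _ _ (approx_sub 3 _ _ _ _ (approx_scal 3 (/ V0) _ _ HF3)
     (approx_scal 3 (/ V0) _ _ (approx_weaken 4 3 _ _ ltac:(lia) HP4))) (approx_const 3 (R00 f g s u x y))) (approx_q2 3 qq)) as HT.
  fold JT in HT.
  pose proof (approx_final _ _ JT0 JT1 JT2 HT) as HT3.
  pose proof (Oh_scal 3 (/ V0) _ (Oh_divh 3 _ diss_O4)) as HD3.
  eapply Oh_ext; [|apply (Oh_minus _ _ _ HT3 HD3)].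
  intros h Hh. cbv beta.
  rewrite Res_eq, Vcell_eq, Qterm_eq by auto.
  unfold ev; cbn [fst snd]. rewrite (r00 f g s u Hf Hg Hu).
  unfold qq, V0. unfold PhiT, uLh, uRh, sum6. pose proof (sg_nz a b c d). field. repeat split; auto; lra.
Qed.
End Main.


Lemma pxy_zero F : (forall x y, F x y = 0) -> (forall x y, px F x y = 0) /\ (forall x y, py F x y = 0).
Proof.
  intros HF. split; intros x y.
  - unfold px. rewrite (Derive_ext _ (fun _ => 0)) by (intros; apply HF). apply Derive_const.
  - unfold py. rewrite (Derive_ext _ (fun _ => 0)) by (intros; apply HF). apply Derive_const.
Qed.

Theorem mainTheorem3 :
  forall (f g : R -> R) (s u : R -> R -> R) (e1 e2 p : R * R)
         (ustar : R * R -> R -> R -> R),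
    smooth1 f -> smooth1 g -> smooth2 s -> smooth2 u ->
    det2 e1 e2 <> 0 ->
    (forall n a b, Rmin a b <= ustar n a b <= Rmax a b) ->
    (* expansion of the residual for any smooth u *)
    (exists C h0 : R, 0 < h0 /\
       forall h : R, 0 < h < h0 ->
         Rabs (Res e1 e2 h f g s u ustar (1/2) (1/4) p
               - ev (rfun f g s u) p
               - / (48 * Vcell e1 e2 h) * Qterm e1 e2 h f g s u p)
         <= C * h ^ 3) /\
    (* truncation error for an exact solution *)
    ((forall x y, rfun f g s u x y = 0) ->
     exists C h0 : R, 0 < h0 /\
       forall h : R, 0 < h < h0 ->
         Rabs (Res e1 e2 h f g s u ustar (1/2) (1/4) p) <= C * h ^ 3).
Proof.
  intros f g s u e1 e2 p ustar Hf Hg Hs Hu Hdet Hust.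
  destruct e1 as [a b], e2 as [c d], p as [x y].
  assert (HD : a * d - b * c <> 0) by exact Hdet.
  destruct (main_O3 a b c d HD f g s u ustar x y Hf Hg Hs Hu Hust) as [C [h0 [HC [Hh0 HB]]]].
  split.
  - exists C, h0. split; auto.
  - intros Hr. exists C, h0. split; auto. intros h Hh. specialize (HB h Hh).
    destruct (pxy_zero _ Hr) as [H1 H2].
    destruct (pxy_zero _ H1) as [H11 H12].
    destruct (pxy_zero _ H2) as [H21 H22].
    assert (Hq : Qterm (a, b) (c, d) h f g s u (x, y) = 0).
    { unfold Qterm, sum6, ev. cbv zeta. cbn [fst snd]. rewrite !H11, !H21, !H22. ring. }
    assert (Hr0 : ev (rfun f g s u) (x, y) = 0) by (apply Hr).
    rewrite Hq, Hr0 in HB. replace (Res (a, b) (c, d) h f g s u ustar (1 / 2) (1 / 4) (x, y) - 0 - / (48 * Vcell (a, b) (c, d) h) * 0)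
      with (Res (a, b) (c, d) h f g s u ustar (1 / 2) (1 / 4) (x, y)) in HB by ring. exact HB.
Qed.
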